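(* If $\mathcal{A}$ is a partial combinatory algebra whose underlying set is finite, then $|\mathcal{A}|=1$.
   Context: A partial applicative structure (pas) is a set $\mathcal{A}$ with a partial binary map $(a,b)\mapsto a\cdot b = ab$ (''$a$ applied to $b$''); application associates to the left ($abc=(ab)c$), $ab\downarrow$ means $ab$ is defined, and for closed terms $t\simeq s$ means both are undefined or both are defined and equal (application is strict). A pas is a partial combinatory algebra (pca) if it is combinatory complete: for every term $t(x_1,\dots,x_n,x)$ ($n\ge 0$) built from elements of $\mathcal{A}$, variables and application, there is $b\in\mathcal{A}$ with $ba_1\cdots a_n\downarrow$ and $ba_1\cdots a_na\simeq t(a_1,\dots,a_n,a)$ for all $a_1,\dots,a_n,a\in\mathcal{A}$. Equivalently, $\mathcal{A}$ contains elements $k,s$ with $kab=a$ and $sab\downarrow$, $sabc\simeq ac(bc)$ for all $a,b,c$. *)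

(* Defs.v *)
From mathcomp Require Import all_boot.
Set Implicit Arguments. Unset Strict Implicit. Unset Printing Implicit Defensive.

(* A partial applicative structure on a carrier A: partial binary application,
   with None meaning "undefined". *)
Definition pas (A : Type) := A -> A -> option A.

Definition papp {A : Type} (app : pas A) (x y : option A) : option A :=
  match x, y with
  | Some a, Some b => app a b
  | _, _ => None
  end.

Inductive term (A : Type) : Type :=
  | Const : A -> term A
  | Var : nat -> term A
  | App : term A -> term A -> term A.

Fixpoint vars_below {A : Type} (n : nat) (t : term A) : bool :=
  match t with
  | Const _ => true
  | Var i => i < n
  | App t1 t2 => vars_below n t1 && vars_below n t2
  end.

Fixpoint eval {A : Type} (app : pas A) (rho : nat -> A) (t : term A) : option A :=
  match t with
  | Const a => Some a
  | Var i => Some (rho i)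
  | App t1 t2 => papp app (eval app rho t1) (eval app rho t2)
  end.

Definition app_list {A : Type} (app : pas A) (b : A) (s : seq A) : option A :=
  foldl (fun acc a => papp app acc (Some a)) (Some b) s.

(* Combinatory completeness: for every term t(x_0,...,x_{n-1},x_n) there is b
   with b a_0 ... a_{n-1} defined and b a_0 ... a_{n-1} a ~ t(a_0,...,a_{n-1},a).
   Kleene equality of closed terms is equality in option A. *)
Definition combinatory_complete {A : Type} (app : pas A) : Prop :=
  forall (n : nat) (t : term A), vars_below n.+1 t ->
    exists b : A, forall (s : seq A), size s = n ->
      app_list app b s <> None /\
      forall a : A,
        app_list app b (rcons s a) = eval app (fun i => nth a (rcons s a) i) t.

Definition is_pca {A : Type} (app : pas A) : Prop := combinatory_complete app.

(* Main.v *)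
Require Import Defs.
From mathcomp Require Import all_boot.

Theorem mainTheorem1 (A : finType) (app : pas A) :
  is_pca app -> #|A| = 1.
Proof.
move=> H.
have [K HK] := H 1 (Var A 0) isT.
have [I HI] := H 0 (Var A 0) isT.
have Kdef : forall a, app K a = Some (odflt a (app K a)).
  move=> a; have [Hn _] := HK [:: a] erefl; move: Hn; rewrite /app_list /=.
  by case: (app K a).
have Kc : forall a c, papp app (app K a) (Some c) = Some a.
  by move=> a c; have [_ Hc] := HK [:: a] erefl; have := Hc c.
set f := fun a => odflt a (app K a).
have finj : injective f.
  move=> a b Hab; have E1 := Kc a a; have E2 := Kc b a.
  rewrite Kdef in E1; rewrite Kdef in E2; rewrite /f in Hab.
  rewrite Hab in E1; rewrite E1 in E2; by case: E2.
have [g fg gf] := injF_bij finj.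
have Hall : forall c, c = g I.
  move=> c; have [_ Hc] := HI [::] erefl; have := Hc c.
  rewrite /app_list /= => HIc.
  have E := Kc (g I) c; rewrite Kdef in E; have E' : odflt (g I) (app K (g I)) = I by exact: (gf I).
  rewrite E' /= HIc in E; by case: E.
rewrite -(card1 (g I)); apply: eq_card => c; rewrite !inE; by rewrite -(Hall c) eqxx.
Qed.
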